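(* Consider an asynchronous message-passing system of $n$ processes with reliable point-to-point channels between every pair of processes, in which up to $t$ processes may crash, with $n>2t$. For every integer $k > \frac{n-t}{n-2t}$, there exists an algorithm solving $k$-set agreement in this system.
   Context: $k$-set agreement (decisions allowed in $V\cup\{\bot\}$, $\bot$ counting as a decided value): each process proposes an initial value from a set $V$; (Validity) if all correct processes propose the same value $v$, no correct process decides a value different from $v$; (Agreement) at most $k$ distinct values are decided by correct processes; (Termination) every correct process eventually decides. A crashed process stops taking steps; a correct process never crashes. Asynchronous: messages sent between correct processes are eventually received, with no bound on delays. *)

(* Defs.v *)
From Stdlib Require Import List.
From mathcomp Require Import all_boot.
Set Implicit Arguments. Unset Strict Implicit. Unset Printing Implicit Defensive.

(* An atomic step of process p: given its
   current state and optionally one received message (sender, content), it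
   moves to a new state and sends a finite list of point-to-point messages
   (destination, content).  [decision s] is None while undecided; otherwise
   Some d with d : option V, where d = None encodes the special value bottom. *)
Record algorithm (n : nat) (V : Type) := Algorithm {
  St : Type;
  Msg : Type;
  init : 'I_n -> V -> St;
  step : 'I_n -> St -> option ('I_n * Msg) -> St * seq ('I_n * Msg);
  decision : St -> option (option V) }.
Arguments init {n V} a _ _.
Arguments step {n V} a _ _ _.
Arguments decision {n V} a _.

(* Time is an interleaving of atomic steps: at time t
   process [ev_p t] takes a step, receiving the message identified by
   [ev_r t] (a pair (t0, i) = the i-th message sent at time t0), or nothing. *)
Record run (n : nat) (V : Type) (A : algorithm n V)
    (prop : 'I_n -> V) (F : {set 'I_n}) := Run {
  ev_p : nat -> 'I_n;
  ev_r : nat -> option (nat * nat);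
  st : nat -> 'I_n -> St A;
  out : nat -> seq ('I_n * Msg A);
  rcvd : nat -> option ('I_n * Msg A);
  run_init : forall p, st 0 p = init A p (prop p);
  run_step : forall tm, step A (ev_p tm) (st tm (ev_p tm)) (rcvd tm)
                        = (st tm.+1 (ev_p tm), out tm);
  run_frame : forall tm q, q != ev_p tm -> st tm.+1 q = st tm q;
  run_none : forall tm, ev_r tm = None -> rcvd tm = None;
  run_recv : forall tm t0 i, ev_r tm = Some (t0, i) ->
     (t0 < tm)%N /\ exists m, onth (out t0) i = Some (ev_p tm, m)
                             /\ rcvd tm = Some (ev_p t0, m);
  run_nodup : forall tm tm' id, ev_r tm = Some id -> ev_r tm' = Some id -> tm = tm';
  run_crash : forall p, p \in F -> exists T, forall tm, (T <= tm)%N -> ev_p tm != p;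
  run_correct : forall p, p \notin F -> forall T, exists tm, (T <= tm)%N /\ ev_p tm = p;
  run_reliable : forall t0 i q m, onth (out t0) i = Some (q, m) ->
     ev_p t0 \notin F -> q \notin F -> exists tm, ev_r tm = Some (t0, i) }.

(* Process p decides d in run r: d is the first decision value it outputs
   (decisions are irrevocable: only the first one counts). *)
Definition decides n V (A : algorithm n V) prop F (r : run A prop F)
    (p : 'I_n) (d : option V) : Prop :=
  exists T, decision A (st r T p) = Some d /\
            forall T', (T' < T)%N -> decision A (st r T' p) = None.

(* A solves k-set agreement in the system where up to tt processes may crash
   (decided values range over V ∪ {bottom}, bottom counting as a value). *)
Definition solves_kset n V (A : algorithm n V) (tt k : nat) : Prop :=
  forall (prop : 'I_n -> V) (F : {set 'I_n}), (#|F| <= tt)%N ->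
  forall r : run A prop F,
    (forall v : V, (forall p, p \notin F -> prop p = v) ->
       forall p d, p \notin F -> decides r p d -> d = Some v) /\
    (exists L : seq (option V), (size L <= k)%N /\
       forall p d, p \notin F -> decides r p d -> In d L) /\
    (forall p, p \notin F -> exists d, decides r p d).

(* Main.v *)
From Stdlib Require Import List ClassicalEpsilon.
Require Import Defs.
From mathcomp Require Import all_boot zify.
Set Implicit Arguments. Unset Strict Implicit. Unset Printing Implicit Defensive.

Lemma In_cat {T} (x : T) (s1 s2 : seq T) : In x (s1 ++ s2) <-> In x s1 \/ In x s2.
Proof. elim: s1 => [|a s IH] /=; first by tauto. rewrite IH; tauto. Qed.

Lemma has_In {T} (a : pred T) (s : seq T) : has a s <-> exists x, In x s /\ a x.
Proof.
elim: s => [|b s IH] /=; first by split => // [[x []]].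
split.
- case/orP => [h|/IH [x [h1 h2]]]; [by exists b; auto| by exists x; auto].
- move=> [x [[<-|h1] h2]]; first by rewrite h2.
  by apply/orP; right; apply/IH; exists x.
Qed.

Lemma In_flatten {T} (x : T) (L : seq (seq T)) :
  In x (flatten L) <-> exists l, In l L /\ In x l.
Proof.
elim: L => [|l L IH] /=; first by split => // [[l []]].
rewrite In_cat IH; split.
- case=> [h|[l' [h1 h2]]]; [by exists l; auto | by exists l'; auto].
- move=> [l' [[<-|h1] h2]]; [by left | by right; exists l'].
Qed.

Lemma In_map' {T U} (f : T -> U) x (s : seq T) : In x s -> In (f x) (map f s).
Proof. elim: s => [|a s IH] //= [->|h]; [by left|by right; auto]. Qed.

Lemma In_map_inv {T U} (f : T -> U) y (s : seq T) : In y (map f s) -> exists x, In x s /\ y = f x.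
Proof. elim: s => [|a s IH] //= [<-|/IH [x [h ->]]]; [by exists a; auto|by exists x; auto]. Qed.

Lemma mem_In {T : eqType} (x : T) s : x \in s -> In x s.
Proof. elim: s => [|a s IH] //=; rewrite inE => /orP [/eqP->|/IH]; auto. Qed.

Lemma onth_In {T} (s : seq T) i x : onth s i = Some x -> In x s.
Proof. elim: s i => [|a s IH] [|i] //=; [case=> ->; auto| move/IH; auto]. Qed.

Lemma In_onth {T} (s : seq T) x : In x s -> exists i, onth s i = Some x.
Proof.
elim: s => [|a s IH] //= [->|/IH [i h]]; [by exists 0| by exists i.+1].
Qed.

Section Alg.
Variables (n t : nat) (V : Type).

Definition eqV (a b : V) : bool :=
  if excluded_middle_informative (a = b) then true else false.
Lemma eqVP a b : reflect (a = b) (eqV a b).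
Proof. rewrite /eqV; case: excluded_middle_informative => h; by constructor. Qed.

Inductive msg := M1 of V | M2 of seq ('I_n * V).
Record state := State { myv : V; started : bool; r1 : seq ('I_n * V);
  sent2 : bool; r2 : seq ('I_n * seq ('I_n * V)) }.

Definition sndrs {X} (l : seq ('I_n * X)) : {set 'I_n} :=
  [set q | has (fun e => e.1 == q) l].
Definition diff (u : V) (U : seq ('I_n * V)) : {set 'I_n} :=
  [set q | has (fun e => (e.1 == q) && ~~ eqV e.2 u) U].

Definition recv (s : state) (m : option ('I_n * msg)) : state :=
  match m with
  | Some (q, M1 v) => State (myv s) (started s) ((q, v) :: r1 s) (sent2 s) (r2 s)
  | Some (q, M2 l) => State (myv s) (started s) (r1 s) (sent2 s) ((q, l) :: r2 s)
  | None => s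
  end.

Definition bcast (c : msg) : seq ('I_n * msg) := [seq (q, c) | q <- enum 'I_n].

Definition cond (s : state) : bool := ~~ sent2 s && (n - t <= #|sndrs (r1 s)|).

Definition stepf (p : 'I_n) (s : state) (m : option ('I_n * msg)) :
    state * seq ('I_n * msg) :=
  let s1 := recv s m in
  (State (myv s1) true (r1 s1) (sent2 s1 || cond s1) (r2 s1),
   (if started s1 then [::] else bcast (M1 (myv s1))) ++
   (if cond s1 then bcast (M2 (r1 s1)) else [::])).

Definition decf (s : state) : option (option V) :=
  if n - t <= #|sndrs (r2 s)| then
    Some (if #|diff (myv s) (flatten (map snd (r2 s)))| <= t then Some (myv s) else None)
  else None.

Definition initf (p : 'I_n) (v : V) : state := State v false [::] false [::].

Definition alg : algorithm n V := @Algorithm n V state msg initf stepf decf.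


Lemma recv_myv s m : myv (recv s m) = myv s.
Proof. by case: m => [[q []]|]. Qed.
Lemma recv_started s m : started (recv s m) = started s.
Proof. by case: m => [[q []]|]. Qed.
Lemma recv_sent2 s m : sent2 (recv s m) = sent2 s.
Proof. by case: m => [[q []]|]. Qed.
Lemma recv_r1 s m e : In e (r1 s) -> In e (r1 (recv s m)).
Proof. by case: m => [[q []]|] //= *; right. Qed.
Lemma recv_r2 s m e : In e (r2 s) -> In e (r2 (recv s m)).
Proof. by case: m => [[q []]|] //= *; right. Qed.

Lemma In_bcast q c : In (q, c) (bcast c).
Proof. apply: (In_map' (fun q => (q, c))); apply: mem_In; by rewrite mem_enum. Qed.
Lemma In_bcast_inv q c c' : In (q, c') (bcast c) -> c' = c.
Proof. move=> h; have [x [_ e]] := In_map_inv h; by case: e. Qed.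

Lemma out_M1 p s m q v : In (q, M1 v) (stepf p s m).2 -> v = myv s.
Proof.
rewrite /stepf /= In_cat => h.
have H : forall c, In (q, M1 v) (bcast c) -> M1 v = c by move=> c /In_bcast_inv.
case: h; case: ifP => _ //.
- by move/H => [->]; rewrite recv_myv.
- by move/H.
Qed.

Lemma out_M2 p s m q l : In (q, M2 l) (stepf p s m).2 ->
  [/\ l = r1 (recv s m), cond (recv s m) & sent2 (stepf p s m).1].
Proof.
rewrite /stepf /= In_cat => h.
have H : forall c, In (q, M2 l) (bcast c) -> M2 l = c by move=> c /In_bcast_inv.
case: h; case: ifP => hc //.
- by move/H.
- by move/H => [->]; split => //=; apply/orP; right.
Qed.

End Alg.
Arguments M1 {n V} _.
Arguments M2 {n V} _.

Section Run.
Variables (n t : nat) (V : Type) (prop : 'I_n -> V) (F : {set 'I_n}).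
Variable r : run (alg n t V) prop F.

Definition S tm p : state n V := st r tm p.

Lemma st_step tm : S tm.+1 (ev_p r tm) = (stepf t (ev_p r tm) (S tm (ev_p r tm)) (rcvd r tm)).1.
Proof. exact: esym (f_equal fst (run_step r tm)). Qed.
Lemma out_step tm : out r tm = (stepf t (ev_p r tm) (S tm (ev_p r tm)) (rcvd r tm)).2.
Proof. exact: esym (f_equal snd (run_step r tm)). Qed.
Lemma st_frame tm q : q != ev_p r tm -> S tm.+1 q = S tm q.
Proof. exact: run_frame. Qed.

Lemma mono (Rel : state n V -> state n V -> Prop) :
  (forall s, Rel s s) -> (forall a b c, Rel a b -> Rel b c -> Rel a c) ->
  (forall p s m, Rel s (stepf t p s m).1) ->
  forall q tm tm', tm <= tm' -> Rel (S tm q) (S tm' q).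
Proof.
move=> Rr Rt Rs q tm tm' /subnK <-; elim: (tm' - tm) => [|d IH] //.
apply: Rt IH _; rewrite addSn.
case: (eqVneq q (ev_p r (d + tm))) => [->|ne].
- rewrite st_step; exact: Rs.
- by rewrite st_frame.
Qed.

Lemma flip (f : state n V -> bool) q tm :
  f (S 0 q) = false -> f (S tm q) = true ->
  exists t0, [/\ t0 < tm, ev_p r t0 = q, f (S t0 q) = false & f (S t0.+1 q) = true].
Proof.
move=> h0; elim: tm => [|tm IH]; first by rewrite h0.
case e: (f (S tm q)) => h.
- by have [t0 [h1 h2 h3 h4]] := IH e; exists t0; split => //; apply: ltnW.
- exists tm; split => //.
  apply/eqP; apply: contraT => ne; move: h; rewrite st_frame ?e //.
  by rewrite eq_sym.
Qed.

Lemma rcvd_src tm j c : rcvd r tm = Some (j, c) ->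
  exists t0, [/\ t0 < tm, ev_p r t0 = j & In (ev_p r tm, c) (out r t0)].
Proof.
case e: (ev_r r tm) => [[t0 i]|]; last by rewrite (run_none e).
have [lt [m [h1 h2]]] := run_recv e.
rewrite h2 => -[<- <-]; exists t0; split => //; exact: onth_In h1.
Qed.

Lemma deliver t0 p c : In (p, c) (out r t0) -> ev_p r t0 \notin F -> p \notin F ->
  exists tm, ev_p r tm = p /\ rcvd r tm = Some (ev_p r t0, c).
Proof.
move=> hin h1 h2; have [i hi] := In_onth hin.
have [tm etm] := run_reliable hi h1 h2.
have [_ [m [h3 h4]]] := run_recv etm.
move: h3; rewrite hi => -[-> ->]; by exists tm.
Qed.

Definition goodl (l : seq ('I_n * V)) := forall e, In e l -> e.2 = prop e.1.
Definition Sent2 j l := exists t0 q, ev_p r t0 = j /\ In (q, M2 l) (out r t0).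
Definition GoodView l := goodl l /\ n - t <= #|sndrs l|.
Definition good p (s : state n V) := [/\ myv s = prop p, goodl (r1 s) &
  forall e, In e (r2 s) -> Sent2 e.1 e.2 /\ GoodView e.2].
Definition Inv tm := forall p, good p (S tm p).

Lemma recv_good1 tm : (forall t', t' <= tm -> Inv t') ->
  goodl (r1 (recv (S tm (ev_p r tm)) (rcvd r tm))).
Proof.
move=> hI; have [_ g1 _] := hI tm (leqnn _) (ev_p r tm).
case e: (rcvd r tm) => [[j [v|l]]|] //= x [<-|hx]; last by apply: g1.
have [t0 [lt ej hin]] := rcvd_src e.
rewrite out_step in hin; have hv := out_M1 hin; rewrite /= hv.
have [h _ _] := hI t0 (ltnW lt) (ev_p r t0); by rewrite h ej.
Qed.

Lemma msg_gv t0 q l : (forall t', t' <= t0 -> Inv t') -> In (q, M2 l) (out r t0) -> GoodView l.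
Proof.
move=> hI; rewrite out_step => /out_M2 [-> hc _]; split.
- exact: recv_good1.
- by move: hc => /andP [].
Qed.

Lemma Inv0 : Inv 0.
Proof. move=> p; rewrite /S (run_init r p); by split. Qed.

Lemma Inv_all tm : forall t', t' <= tm -> Inv t'.
Proof.
elim: tm => [|tm IH] t'; first by rewrite leqn0 => /eqP ->; exact: Inv0.
rewrite leq_eqVlt => /orP [/eqP ->|]; last by apply: IH.
move=> p; case: (eqVneq p (ev_p r tm)) => [->|ne]; last first.
  rewrite st_frame //; exact: IH.
have [g0 g1 g2] := IH tm (leqnn _) (ev_p r tm).
rewrite st_step; split => /=.
- by rewrite recv_myv.
- exact: recv_good1.
- case e: (rcvd r tm) => [[j [v|l]]|] //= x; try by apply: g2.
  case=> [<-|]; last by apply: g2.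
  have [t0 [lt ej hin]] := rcvd_src e.
  split; first by exists t0, (ev_p r tm).
  apply: msg_gv hin => t'' h; apply: IH; exact: leq_trans h (ltnW lt).
Qed.

Lemma Inv_any tm p : good p (S tm p).
Proof. exact: Inv_all (leqnn tm) p. Qed.

Lemma sent2_mono q tm tm' : tm <= tm' -> sent2 (S tm q) -> sent2 (S tm' q).
Proof.
apply: (mono (Rel := fun x y => sent2 x -> sent2 y)) => //.
- by move=> a b c h1 h2 /h1 /h2.
- by move=> p s m /= h; rewrite recv_sent2 h.
Qed.

Lemma sent2_before a b q l : In (q, M2 l) (out r a) -> a < b -> sent2 (S b (ev_p r a)).
Proof.
rewrite out_step => /out_M2 [_ _ h] lt.
apply: (sent2_mono lt); by rewrite st_step.
Qed.

Lemma no_M2_after a q l : In (q, M2 l) (out r a) -> sent2 (S a (ev_p r a)) = false.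
Proof.
rewrite out_step => /out_M2 [_ /andP [h _] _]; move: h; by rewrite recv_sent2 => /negbTE.
Qed.

Lemma sent2_unique j l l' : Sent2 j l -> Sent2 j l' -> l = l'.
Proof.
move=> [a [q [ea ha]]] [b [q' [eb hb]]].
case: (ltngtP a b) => [lt|lt|eab].
- have := sent2_before ha lt; by rewrite ea -eb (no_M2_after hb).
- have := sent2_before hb lt; by rewrite eb -ea (no_M2_after ha).
- subst b; move: ha hb; rewrite out_step => /out_M2 [-> _ _] /out_M2 [-> _ _] //.
Qed.

Definition UU (s : state n V) := flatten (map snd (r2 s)).

Lemma decf_some s d : decf t s = Some d ->
  n - t <= #|sndrs (r2 s)| /\
  d = if #|diff (myv s) (UU s)| <= t then Some (myv s) else None.
Proof. rewrite /decf; case: ifP => // h [<-]; by split. Qed.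

Lemma UU_good p s e : good p s -> In e (UU s) -> e.2 = prop e.1.
Proof.
move=> [_ _ g2] /In_flatten [l [hl he]].
have [x [hx el]] := In_map_inv hl; subst l.
have [_ [gl _]] := g2 x hx; exact: gl.
Qed.

Lemma diff_neq p s u q : good p s -> q \in diff u (UU s) -> prop q <> u.
Proof.
move=> g; rewrite inE => /has_In [e [he /andP [/eqP <- hne]]].
rewrite -(UU_good g he) => h; move: hne; by rewrite h; case: eqVP.
Qed.

Lemma validity_run p d v : #|F| <= t -> p \notin F -> (forall q, q \notin F -> prop q = v) ->
  decides r p d -> d = Some v.
Proof.
move=> hF hp hv [T [hd _]].
have g := Inv_any T p.
have [_ ->] := decf_some hd.
have [hm _ _] := g.
rewrite hm (hv p hp).
have -> : #|diff v (UU (S T p))| <= t.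
  apply: leq_trans hF; apply: subset_leq_card; apply/subsetP => q hq.
  apply: contraT => hq'; case: (diff_neq g hq (hv q hq')).
by [].
Qed.

Lemma correct_M1 q : q \notin F ->
  exists t0, ev_p r t0 = q /\ forall p', In (p', M1 (prop q)) (out r t0).
Proof.
move=> hq; have [tm [_ etm]] := run_correct r hq 0.
have h1 : started (S tm.+1 q) = true by rewrite -etm st_step.
have h0 : started (S 0 q) = false by rewrite /S (run_init r q).
have [t0 [_ e0 hs _]] := flip h0 h1.
exists t0; split => // p'; rewrite out_step In_cat; left.
rewrite recv_started e0 hs recv_myv.
have [-> _ _] := Inv_any t0 q; exact: In_bcast.
Qed.

Lemma sndrs_incl {X} (l l' : seq ('I_n * X)) :
  (forall e, In e l -> In e l') -> sndrs l \subset sndrs l'.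
Proof.
move=> h; apply/subsetP => q; rewrite !inE => /has_In [e [he hq]].
apply/has_In; exists e; split => //; exact: h.
Qed.

Lemma r1_mono p tm tm' : tm <= tm' -> sndrs (r1 (S tm p)) \subset sndrs (r1 (S tm' p)).
Proof.
apply: (mono (Rel := fun x y => sndrs (r1 x) \subset sndrs (r1 y))) => //.
- by move=> a b c; apply: subset_trans.
- move=> p' s m; apply: sndrs_incl => e /=; exact: recv_r1.
Qed.

Lemma r2_mono p tm tm' : tm <= tm' -> sndrs (r2 (S tm p)) \subset sndrs (r2 (S tm' p)).
Proof.
apply: (mono (Rel := fun x y => sndrs (r2 x) \subset sndrs (r2 y))) => //.
- by move=> a b c; apply: subset_trans.
- move=> p' s m; apply: sndrs_incl => e /=; exact: recv_r2.
Qed.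

Lemma max_time (P : 'I_n -> bool) (Q : 'I_n -> nat -> Prop) :
  (forall q T T', T <= T' -> Q q T -> Q q T') -> (forall q, P q -> exists T, Q q T) ->
  exists T, forall q, P q -> Q q T.
Proof.
move=> hm hex.
suff [T hT] : exists T, forall q, q \in enum 'I_n -> P q -> Q q T.
  by exists T => q; apply: hT; rewrite mem_enum.
elim: (enum 'I_n) => [|a s [T IH]]; first by exists 0.
case hPa: (P a).
- have [Ta hTa] := hex a hPa; exists (maxn T Ta) => q; rewrite inE => /orP [/eqP ->|hq] hP.
  + apply: hm hTa; exact: leq_maxr.
  + apply: hm (IH q hq hP); exact: leq_maxl.
- exists T => q; rewrite inE => /orP [/eqP ->|hq] hP; first by rewrite hPa in hP.
  exact: IH.
Qed.

Lemma card_correct (X : {set 'I_n}) : #|F| <= t -> (forall q, q \notin F -> q \in X) -> n - t <= #|X|.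
Proof.
move=> hF hX; have h1 : ~: F \subset X by apply/subsetP => q; rewrite inE; exact: hX.
have := subset_leq_card h1; have := cardsC F; rewrite card_ord; lia.
Qed.

Lemma all_M1_recv p : p \notin F -> exists T, forall q, q \notin F -> q \in sndrs (r1 (S T p)).
Proof.
move=> hp; apply: (max_time (P := fun q => q \notin F)).
  move=> q T T' le h; exact: (subsetP (r1_mono p le)).
move=> q hq; have [t0 [e0 hin]] := correct_M1 hq.
have [tm [etm hr]] := deliver (hin p) (ltac:(by rewrite e0)) hp.
exists tm.+1; rewrite -etm st_step /= hr /= e0 inE /=; by rewrite eqxx.
Qed.

Lemma correct_M2 j : #|F| <= t -> j \notin F ->
  exists t0 l, ev_p r t0 = j /\ forall p', In (p', M2 l) (out r t0).
Proof.
move=> hF hj; have [T hT] := all_M1_recv hj.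
have [tm [le etm]] := run_correct r hj T.
have h1 : sent2 (S tm.+1 j) = true.
  rewrite -etm st_step /= /cond; case: (sent2 (recv _ _)) => //=.
  apply: leq_trans (card_correct hF hT) _; apply: subset_leq_card.
  apply: subset_trans (r1_mono j le) _; rewrite etm.
  apply: sndrs_incl => e; exact: recv_r1.
have h0 : sent2 (S 0 j) = false by rewrite /S (run_init r j).
have [t0 [_ e0 hs hs1]] := flip h0 h1.
move: hs1; rewrite -e0 st_step /= recv_sent2 e0 hs /= => hc.
exists t0, (r1 (recv (S t0 (ev_p r t0)) (rcvd r t0))); split => // p'.
rewrite out_step In_cat; right; rewrite /= e0 hc; exact: In_bcast.
Qed.

Lemma all_M2_recv p : #|F| <= t -> p \notin F ->
  exists T, forall q, q \notin F -> q \in sndrs (r2 (S T p)).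
Proof.
move=> hF hp; apply: (max_time (P := fun q => q \notin F)).
  move=> q T T' le h; exact: (subsetP (r2_mono p le)).
move=> q hq; have [t0 [l [e0 hin]]] := correct_M2 hF hq.
have [tm [etm hr]] := deliver (hin p) (ltac:(by rewrite e0)) hp.
exists tm.+1; rewrite -etm st_step /= hr /= e0 inE /=; by rewrite eqxx.
Qed.

Lemma termination_run p : #|F| <= t -> p \notin F -> exists d, decides r p d.
Proof.
move=> hF hp; have [T hT] := all_M2_recv hF hp.
have ex : exists T, isSome (decf t (S T p)).
  exists T; rewrite /decf (card_correct hF hT) //.
case: (ex_minnP ex) => m hm hmin.
case e: (decf t (S m p)) hm => [d|] // _.
exists d, m; split => // T' lt.
case e': (decf t (S T' p)) => [d'|] //.
have := hmin T'; rewrite e' => /(_ erefl); by rewrite leqNgt lt.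
Qed.

Lemma decf_Some s w : decf t s = Some (Some w) ->
  [/\ n - t <= #|sndrs (r2 s)|, w = myv s & #|diff w (UU s)| <= t].
Proof.
move/decf_some => [h1]; case: ifP => // h2 [e]; rewrite e; by split.
Qed.

Lemma mem_diff (l : seq ('I_n * V)) s u q : (forall x, In x l -> In x (UU s)) -> goodl l ->
  q \in sndrs l -> prop q <> u -> q \in diff u (UU s).
Proof.
move=> hl gl; rewrite !inE => /has_In [x [hx /eqP hq]] hne.
apply/has_In; exists x; split; first exact: hl.
rewrite hq eqxx /= (gl x hx) hq; by case: eqVP.
Qed.

Lemma in_sndrs {X} (l : seq ('I_n * X)) q : q \in sndrs l -> exists x, In x l /\ x.1 = q.
Proof. rewrite inE => /has_In [x [hx /eqP hq]]; by exists x. Qed.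

Lemma view_UU s x : In x (r2 s) -> forall y, In y x.2 -> In y (UU s).
Proof. move=> hx y hy; apply/In_flatten; exists x.2; split => //; exact: In_map'. Qed.

Lemma core p p1 T T1 w w1 : 2 * t < n ->
  decf t (S T p) = Some (Some w) -> decf t (S T1 p1) = Some (Some w1) -> w <> w1 ->
  exists q0, [/\ q0 \in diff w1 (UU (S T1 p1)), prop q0 = w &
     n - 2 * t <= #|[set q in diff w1 (UU (S T1 p1)) | eqV (prop q) w]| ].
Proof.
move=> hn /decf_Some [hR _ hd] /decf_Some [hR1 _ _] hne.
set s := S T p in hR hd *; set s1 := S T1 p1 in hR1 *.
have : 0 < #|sndrs (r2 s) :&: sndrs (r2 s1)|.
  have := cardsUI (sndrs (r2 s)) (sndrs (r2 s1)).
  have := max_card (sndrs (r2 s) :|: sndrs (r2 s1)); rewrite card_ord; lia.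
rewrite card_gt0 => /set0Pn [j]; rewrite inE => /andP [/in_sndrs [x [hx ex]] /in_sndrs [x' [hx' ex']]].
have [_ _ g2] := Inv_any T p; have [_ _ g2'] := Inv_any T1 p1.
have [hs [gl hX]] := g2 x hx; have [hs' _] := g2' x' hx'.
rewrite ex in hs; rewrite ex' in hs'.
have el := sent2_unique hs hs'.
set X := sndrs x.2.
set Y := [set q in X | eqV (prop q) w].
have hXY : X :\: Y \subset diff w (UU s).
  apply/subsetP => q /setDP [hqX hq]; apply: (mem_diff (l := x.2)) => //.
  - exact: view_UU hx.
  - by move: hq; rewrite inE hqX /=; case: eqVP.
have hY : n - 2 * t <= #|Y|.
  have := subset_leq_card hXY; have := cardsID Y X.
  have -> : X :&: Y = Y by apply/setIidPr/subsetP => q; rewrite inE => /andP [].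
  move: hX; rewrite -/X; lia.
have hYsub : Y \subset [set q in diff w1 (UU s1) | eqV (prop q) w].
  apply/subsetP => q; rewrite inE => /andP [hq /eqVP hqw].
  rewrite inE; apply/andP; split; last by apply/eqVP.
  apply: (mem_diff (l := x.2)) => //; last by rewrite hqw.
  rewrite el; exact: view_UU hx'.
have : 0 < #|Y| by lia.
rewrite card_gt0 => /set0Pn [q0 hq0]; exists q0; split.
- by move: (subsetP hYsub q0 hq0); rewrite inE => /andP [].
- by move: hq0; rewrite inE => /andP [_ /eqVP].
- apply: leq_trans hY _; exact: subset_leq_card.
Qed.

Lemma agreement_run (k : nat) : 2 * t < n -> n - t < k * (n - 2 * t) ->
  exists L : seq (option V), size L <= k /\
     forall p d, p \notin F -> decides r p d -> In d L.
Proof.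
move=> hn hk.
have k0 : 0 < k by case: k hk; rewrite ?mul0n.
case: (classic (exists p1 T1 w1, decf t (S T1 p1) = Some (Some w1))) => [[p1 [T1 [w1 h1]]]|hno]; last first.
  exists [:: None]; split => // p d _ [T [hd _]].
  case: d hd => [w|] hd; last by left.
  by case: hno; exists p, T, w.
have [_ _ hD1] := decf_Some h1.
set D1 := diff w1 (UU (S T1 p1)) in hD1 *.
pose fib q := [set q' in D1 | eqV (prop q') (prop q)].
pose rep q := odflt q [pick q' in D1 | eqV (prop q') (prop q)].
pose A := [set q in D1 | n - 2 * t <= #|fib q|].
pose Reps := [set rep q | q in A].
have rep_prop q : prop (rep q) = prop q.
  rewrite /rep; case: pickP => //= q' /andP [_ /eqVP] //.
have rep_eq q q' : q \in D1 -> prop q' = prop q -> rep q' = rep q.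
  move=> hq e; rewrite /rep e; case: pickP => //= hnone.
  by move: (hnone q); rewrite hq /=; case: eqVP.
have hA : #|Reps| * (n - 2 * t) <= #|A|.
  rewrite -sum_nat_const -[#|A|]sum1_card [X in _ <= X](partition_big_imset rep) /=.
  apply: leq_sum => j /imsetP [x hx ->].
  rewrite sum1dep_card; apply: leq_trans (_ : #|fib x| <= _).
    by move: hx; rewrite inE => /andP [].
  apply: subset_leq_card; apply/subsetP => i; rewrite !inE => /andP [hi /eqVP e].
  have hx1 : x \in D1 by move: hx; rewrite inE => /andP [].
  have -> : fib i = fib x by apply/setP => y; rewrite !inE e.
  rewrite hi /=; move: hx; rewrite inE => /andP [_ ->] /=.
  by rewrite (rep_eq x i hx1 e).
have hAD : #|A| <= #|D1| by apply: subset_leq_card; apply/subsetP => q; rewrite inE => /andP [].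
have hR : #|Reps| < k.-1.
  rewrite ltnNge; apply/negP => hle.
  have hm : k.-1 * (n - 2 * t) <= #|Reps| * (n - 2 * t) by rewrite leq_mul2r hle orbT.
  have := leq_trans hm hA; move: hk hAD hD1 k0 hn; clear; case: k => // k /=.
  nia.
exists (None :: Some w1 :: [seq Some (prop q) | q <- enum Reps]); split.
  by rewrite /= size_map -cardE; lia.
move=> p d _ [T [hd _]].
case: d hd => [w|] hd; last by left.
case: (classic (w = w1)) => [->|hne]; first by right; left.
right; right.
have [q0 [hq0 e0 hfib]] := core hn hd h1 hne.
have hq0A : q0 \in A by rewrite inE hq0 /=; rewrite /fib e0.
rewrite -e0 -(rep_prop q0); apply: (In_map' (fun q => Some (prop q))).
apply: mem_In; rewrite mem_enum; exact: imset_f.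
Qed.

End Run.

Theorem theorem8 (n t k : nat) (V : Type) :
  (2 * t < n)%N -> (n - t < k * (n - 2 * t))%N ->
  exists A : algorithm n V, solves_kset A t k.
Proof.
move=> hn hk; exists (alg n t V) => prop F hF r; split; [|split].
- move=> v hv p d hp; exact: validity_run.
- exact: agreement_run.
- move=> p hp; exact: termination_run.
Qed.
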